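(* Assume the standing setting and let $\epsilon>0$. If $|u^0_i-u^0_{i+1}|\le \epsilon/3^{M}$ for all $i\in\mathbb Z$, then for every coarse index $j$, $|v_r-u_r|\le\epsilon$, i.e. $|w^N_{j+1}-u^M_{(j+1)r}|\le\epsilon$.
   Context: Standing setting. Let $F:\mathbb R\to\mathbb R$ be continuously differentiable. For a spatial step $\eta>0$, a time step $\tau>0$ and an initial sequence $(z^0_i)_{i\in\mathbb Z}$ of reals, the EFC (Euler forward in time, centered in space) scheme produces $(z^n_i)_{i\in\mathbb Z,\,n\in\mathbb N}$ by $z^{n+1}_i=z^n_i-F'(z^n_i)\frac{\tau}{2\eta}\,(z^n_{i+1}-z^n_{i-1})$. It satisfies the CFL condition if $|F'(z^n_i)|\,\tau/\eta\le 1$ for all $i\in\mathbb Z$, $n\in\mathbb N$. Fix $a\in\mathbb R$, $h>0$, $\Delta t>0$, an integer $N>1$ and an even integer $r\ge 2$; put $k=h/r$, $dt=\Delta t/r$, $M=Nr$. Let $u_0:\mathbb R\to\mathbb R$. The coarse solution $(w^n_j)$ is the EFC scheme with $\eta=h$, $\tau=\Delta t$, $w^0_j=u_0(a+jh)$; the fine solution $(u^n_i)$ is the EFC scheme with $\eta=k$, $\tau=dt$, $u^0_i=u_0(a+ik)$ (so $w^0_j=u^0_{jr}$). Both are assumed to satisfy the CFL condition. Coarse nodes: $x_j=a+jh$. Interpolant: for a fixed coarse index $j$, set $p_1=x_j$, $p_2=x_{j+1}$, $d_1=w^N_j$, $d_2=w^N_{j+1}$, let $q$ be the cubic with $q(0)=p_1$,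 $q(1)=p_2$, $q'(0)=d_1$, $q'(1)=d_2$, and let $v(t)=q'(t)=(6p_1-6p_2+3d_1+3d_2)t^2+(-6p_1+6p_2-4d_1-2d_2)t+d_1$ for $t\in[0,1]$. For $0\le m\le r$ put $v_m=v(m/r)$ and $u_m=u^M_{jr+m}$ (the fine solution at time step $M$ at the fine node $x_j+mk$). *)

(* Defs.v *)
From Stdlib Require Export Reals ZArith.
Open Scope R_scope.

(* EFC scheme (Euler forward in time, centred in space) with flux
   derivative Fp = F', spatial step eta, time step tau, initial data z0.
   efc Fp eta tau z0 n i = z^n_i. *)
Fixpoint efc (Fp : R -> R) (eta tau : R) (z0 : Z -> R) (n : nat) : Z -> R :=
  match n with
  | O => z0
  | S m => fun i =>
      let z := efc Fp eta tau z0 m in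
      z i - Fp (z i) * (tau / (2 * eta)) * (z (i + 1)%Z - z (i - 1)%Z)
  end.

Definition cfl (Fp : R -> R) (eta tau : R) (z : nat -> Z -> R) : Prop :=
  forall (n : nat) (i : Z), Rabs (Fp (z n i)) * tau / eta <= 1.

(* Coarse solution w^n_j : eta = h, tau = Dt, w^0_j = u0 (a + j h). *)
Definition coarse (Fp : R -> R) (a h Dt : R) (u0 : R -> R) : nat -> Z -> R :=
  efc Fp h Dt (fun j => u0 (a + IZR j * h)).

(* Fine solution u^n_i : eta = k = h/r, tau = dt = Dt/r, u^0_i = u0 (a + i k). *)
Definition fine (Fp : R -> R) (a h Dt : R) (r : nat) (u0 : R -> R)
  : nat -> Z -> R :=
  efc Fp (h / INR r) (Dt / INR r) (fun i => u0 (a + IZR i * (h / INR r))).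

(* v(t) = q'(t) for the cubic Hermite-type q with q(0)=p1, q(1)=p2,
   q'(0)=d1, q'(1)=d2. *)
Definition vpoly (p1 p2 d1 d2 t : R) : R :=
  (6 * p1 - 6 * p2 + 3 * d1 + 3 * d2) * t ^ 2
  + (- 6 * p1 + 6 * p2 - 4 * d1 - 2 * d2) * t + d1.

Definition interp (w : nat -> Z -> R) (a h : R) (N : nat) (j : Z) (t : R) : R :=
  vpoly (a + IZR j * h) (a + IZR (j + 1) * h) (w N j) (w N (j + 1)%Z) t.

(* Main.v *)
Require Import Defs.
From Stdlib Require Import Reals ZArith Lra Lia.
Open Scope R_scope.

Section S.
Variables (Fp : R -> R) (eta tau : R) (z0 : Z -> R).
Hypothesis Heta : 0 < eta.
Hypothesis Htau : 0 < tau.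
Hypothesis Hcfl : cfl Fp eta tau (efc Fp eta tau z0).

Lemma step_close n D :
  (forall i, Rabs (efc Fp eta tau z0 n i - efc Fp eta tau z0 n (i+1)%Z) <= D) ->
  forall i, Rabs (efc Fp eta tau z0 (S n) i - efc Fp eta tau z0 n i) <= D.
Proof.
  intros H i. simpl.
  set (z := efc Fp eta tau z0 n).
  assert (Hc : Rabs (Fp (z i) * (tau / (2 * eta))) <= / 2).
  { rewrite Rabs_mult. rewrite (Rabs_right (tau / (2*eta))).
    2:{ apply Rle_ge. apply Rlt_le. apply Rdiv_lt_0_compat; lra. }
    pose proof (Hcfl n i) as Hc. unfold z.
    replace (Rabs (Fp (efc Fp eta tau z0 n i)) * (tau / (2 * eta)))
      with (/2 * (Rabs (Fp (efc Fp eta tau z0 n i)) * tau / eta)) by (field; lra).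
    lra. }
  assert (Hd : Rabs (z (i+1)%Z - z (i-1)%Z) <= 2 * D).
  { pose proof (H i) as H1. pose proof (H (i-1)%Z) as H2.
    replace (i - 1 + 1)%Z with i in H2 by lia. fold z in H1, H2.
    replace (z (i+1)%Z - z (i-1)%Z) with (-(z i - z (i+1)%Z) - (z (i-1)%Z - z i)) by ring.
    eapply Rle_trans. apply Rabs_triang. rewrite Rabs_Ropp, Rabs_Ropp. lra. }
  replace (z i - Fp (z i) * (tau / (2 * eta)) * (z (i + 1)%Z - z (i - 1)%Z) - z i)
    with (- (Fp (z i) * (tau / (2 * eta)) * (z (i + 1)%Z - z (i - 1)%Z))) by ring.
  rewrite Rabs_Ropp, Rabs_mult.
  assert (0 <= Rabs (z (i+1)%Z - z (i-1)%Z)) by apply Rabs_pos.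
  assert (0 <= Rabs (Fp (z i) * (tau / (2 * eta)))) by apply Rabs_pos.
  nra.
Qed.

Variable d : R.
Hypothesis Hd0 : forall i, Rabs (z0 i - z0 (i+1)%Z) <= d.

Lemma diff_bound n : forall i,
  Rabs (efc Fp eta tau z0 n i - efc Fp eta tau z0 n (i+1)%Z) <= 3 ^ n * d.
Proof.
  induction n; intros i.
  - simpl. rewrite Rmult_1_l. apply Hd0.
  - pose proof (step_close n _ IHn) as Hs.
    pose proof (Hs i) as H1. pose proof (Hs (i+1)%Z) as H2.
    pose proof (IHn i) as H3.
    set (a := efc Fp eta tau z0 (S n) i) in *.
    set (b := efc Fp eta tau z0 (S n) (i+1)%Z) in *.
    set (c := efc Fp eta tau z0 n i) in *.
    set (e := efc Fp eta tau z0 n (i+1)%Z) in *.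
    replace (a - b) with ((a - c) + (c - e) - (b - e)) by ring.
    pose proof (Rabs_triang (a - c + (c - e)) (- (b - e))) as T1. rewrite Rabs_Ropp in T1.
    pose proof (Rabs_triang (a - c) (c - e)) as T2.
    replace (a - c + (c - e) - (b - e)) with (a - c + (c - e) + - (b - e)) by ring.
    simpl. lra.
Qed.

Lemma drift_bound (Hd : 0 <= d) n : forall i,
  Rabs (efc Fp eta tau z0 n i - z0 i) <= 3 ^ n * d / 2.
Proof.
  induction n; intros i.
  - simpl. unfold Rminus. rewrite Rplus_opp_r, Rabs_R0. lra.
  - pose proof (step_close n _ (diff_bound n) i) as H1.
    pose proof (IHn i) as H2.
    replace (efc Fp eta tau z0 (S n) i - z0 i) with
      ((efc Fp eta tau z0 (S n) i - efc Fp eta tau z0 n i) + (efc Fp eta tau z0 n i - z0 i)) by ring.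
    eapply Rle_trans. apply Rabs_triang.
    assert (0 <= 3 ^ n * d) by (apply Rmult_le_pos; [apply pow_le; lra | lra]). change (3 ^ S n) with (3 * 3 ^ n). lra.
Qed.
End S.


Lemma pow_lemma r x : (1 <= r)%nat -> 2 <= x -> INR r * x <= x ^ r.
Proof.
  intros Hr Hx. induction r as [|r IH]. lia.
  destruct r. rewrite pow_1. change (INR 1) with 1. lra.
  assert (IH' : INR (S r) * x <= x ^ S r) by (apply IH; lia).
  rewrite S_INR. change (x ^ S (S r)) with (x * x ^ S r).
  assert (1 <= INR (S r)) by (rewrite S_INR; pose proof (pos_INR r); lra).
  assert (A : INR (S r) * x * x <= x * x ^ S r) by nra.
  assert (B : (INR (S r) + 1) * x <= INR (S r) * x * x).
  { assert (1 <= INR (S r) * (x - 1)) by nra. nra. }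
  lra.
Qed.

Lemma telescope (f : Z -> R) d : (forall i, Rabs (f i - f (i+1)%Z) <= d) ->
  forall m i, Rabs (f i - f (i + Z.of_nat m)%Z) <= INR m * d.
Proof.
  intros H m. induction m; intros i.
  - simpl. replace (i+0)%Z with i by lia. unfold Rminus. rewrite Rplus_opp_r, Rabs_R0. lra.
  - rewrite S_INR. replace (i + Z.of_nat (S m))%Z with ((i + Z.of_nat m) + 1)%Z by lia.
    replace (f i - f (i + Z.of_nat m + 1)%Z) with
      ((f i - f (i + Z.of_nat m)%Z) + (f (i + Z.of_nat m)%Z - f (i + Z.of_nat m + 1)%Z)) by ring.
    eapply Rle_trans. apply Rabs_triang. pose proof (IHm i). pose proof (H (i + Z.of_nat m)%Z). lra.
Qed.

Theorem proposition8
  (F Fp : R -> R)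
  (HF : forall x, derivable_pt_lim F x (Fp x))
  (HFp : continuity Fp)
  (a h Dt : R) (N r : nat) (u0 : R -> R)
  (Hh : 0 < h) (HDt : 0 < Dt) (HN : (1 < N)%nat)
  (Hr2 : (2 <= r)%nat) (Hreven : exists m : nat, r = (2 * m)%nat)
  (Hcfl_coarse : cfl Fp h Dt (coarse Fp a h Dt u0))
  (Hcfl_fine : cfl Fp (h / INR r) (Dt / INR r) (fine Fp a h Dt r u0))
  (eps : R) (Heps : 0 < eps)
  (Hinit : forall i : Z,
      Rabs (fine Fp a h Dt r u0 0 i - fine Fp a h Dt r u0 0 (i + 1)%Z)
        <= eps / 3 ^ (N * r))
  : forall j : Z,
      Rabs (interp (coarse Fp a h Dt u0) a h N j (INR r / INR r)
            - fine Fp a h Dt r u0 (N * r)%nat (j * Z.of_nat r + Z.of_nat r)%Z)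
        <= eps
   /\ Rabs (coarse Fp a h Dt u0 N (j + 1)%Z
            - fine Fp a h Dt r u0 (N * r)%nat ((j + 1) * Z.of_nat r)%Z)
        <= eps.
Proof.
  assert (Hrpos : 0 < INR r) by (apply lt_0_INR; lia).
  assert (H3pos : 0 < 3 ^ (N * r)) by (apply pow_lt; lra).
  set (del := eps / 3 ^ (N * r)).
  assert (Hdel : 0 <= del) by (unfold del; apply Rlt_le, Rdiv_lt_0_compat; lra).
  set (f0 := fun i => u0 (a + IZR i * (h / INR r))).
  set (c0 := fun j => u0 (a + IZR j * h)).
  assert (Hfc : forall j, f0 (j * Z.of_nat r)%Z = c0 j).
  { intros j. unfold f0, c0. f_equal. rewrite mult_IZR, <- INR_IZR_INZ. field. lra. }
  assert (Hc0 : forall j, Rabs (c0 j - c0 (j+1)%Z) <= INR r * del).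
  { intros j. rewrite <- !Hfc.
    replace ((j+1) * Z.of_nat r)%Z with (j * Z.of_nat r + Z.of_nat r)%Z by lia.
    apply (telescope f0 del Hinit). }
  assert (Hmain : forall j, Rabs (coarse Fp a h Dt u0 N (j + 1)%Z
            - fine Fp a h Dt r u0 (N * r)%nat ((j + 1) * Z.of_nat r)%Z) <= eps).
  { intros j.
    pose proof (drift_bound Fp h Dt c0 Hh HDt Hcfl_coarse _ Hc0
                  (Rmult_le_pos _ _ (pos_INR r) Hdel) N (j+1)%Z) as D1.
    assert (Hk : 0 < h / INR r) by (apply Rdiv_lt_0_compat; lra).
    assert (Ht : 0 < Dt / INR r) by (apply Rdiv_lt_0_compat; lra).
    pose proof (drift_bound Fp _ _ f0 Hk Ht Hcfl_fine _ Hinit Hdel (N * r) ((j+1) * Z.of_nat r)%Z) as D2.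
    rewrite Hfc in D2.
    change (Rabs (coarse Fp a h Dt u0 N (j + 1)%Z - c0 (j + 1)%Z) <= 3 ^ N * (INR r * del) / 2) in D1.
    change (Rabs (fine Fp a h Dt r u0 (N * r)%nat ((j + 1) * Z.of_nat r)%Z - c0 (j + 1)%Z) <= 3 ^ (N * r) * del / 2) in D2.
    replace (coarse Fp a h Dt u0 N (j + 1)%Z - fine Fp a h Dt r u0 (N * r)%nat ((j + 1) * Z.of_nat r)%Z)
      with ((coarse Fp a h Dt u0 N (j + 1)%Z - c0 (j+1)%Z) -
            (fine Fp a h Dt r u0 (N * r)%nat ((j + 1) * Z.of_nat r)%Z - c0 (j+1)%Z)) by ring.
    unfold Rminus at 1. eapply Rle_trans. apply Rabs_triang. rewrite Rabs_Ropp.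
    assert (E : 3 ^ (N * r) * del = eps) by (unfold del; field; lra).
    assert (P : INR r * 3 ^ N <= 3 ^ (N * r)).
    { rewrite pow_mult. apply pow_lemma. lia.
      apply Rle_trans with (3 ^ 1). simpl; lra. apply Rle_pow; lia || lra. }
    assert (0 <= del * (3 ^ (N * r) - INR r * 3 ^ N)) by (apply Rmult_le_pos; lra).
    assert (3 ^ N * (INR r * del) = del * (INR r * 3 ^ N)) by ring.
    assert (3 ^ (N*r) * del = del * 3 ^ (N*r)) by ring.
    lra. }
  intros j. split; [|apply Hmain].
  replace (INR r / INR r) with 1 by (field; lra).
  replace (j * Z.of_nat r + Z.of_nat r)%Z with ((j + 1) * Z.of_nat r)%Z by lia.
  unfold interp, vpoly.
  replace ((6 * (a + IZR j * h) - 6 * (a + IZR (j + 1) * h) + 3 * coarse Fp a h Dt u0 N j +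
    3 * coarse Fp a h Dt u0 N (j + 1)%Z) * 1 ^ 2 +
   (- 6 * (a + IZR j * h) + 6 * (a + IZR (j + 1) * h) - 4 * coarse Fp a h Dt u0 N j -
    2 * coarse Fp a h Dt u0 N (j + 1)%Z) * 1 + coarse Fp a h Dt u0 N j)
   with (coarse Fp a h Dt u0 N (j + 1)%Z) by ring.
  apply Hmain.
Qed.
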